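(* Assume $\mu\le1$. Then for every positive integer $r$, $$\mathbf{P}[M\ge r]\le\frac1r.$$
   Context: Let $p=(p_0,p_1,p_2,\dots)$ be a probability distribution on the nonnegative integers with mean $\mu=\sum_k kp_k\in(0,\infty)$, and let $\tau(p)$ be a Galton–Watson tree with offspring distribution $p$: it starts with a single root at generation $0$, and every vertex independently has $k$children with probability $p_k$. The out-degree of a vertex is its number of children. $M$ denotes the global maximal out-degree, i.e. the supremum of the out-degrees of all vertices of $\tau(p)$. *)

(* Defs.v *)
From Stdlib Require Import Reals List.
Import ListNotations.
Open Scope R_scope.

(* Finite plane trees; used to represent the first n generations of a
   Galton-Watson tree: a vertex at depth < n is a node whose list of
   children is its full offspring list; vertices at depth n are
   represented by [PNode []] and their offspring is not observed. *)
Inductive ptree : Type := PNode : list ptree -> ptree.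

Fixpoint tuples {A : Type} (k : nat) (l : list A) : list (list A) :=
  match k with
  | O => [[]]
  | S k' => flat_map (fun x => map (cons x) (tuples k' l)) l
  end.

(* All possible shapes of the first n generations (generations 0..n-1
   observed) in which every observed vertex has out-degree < r.
   This list has no repetitions. *)
Fixpoint trees_lt (r n : nat) : list ptree :=
  match n with
  | O => [PNode []]
  | S n' => flat_map (fun k => map PNode (tuples k (trees_lt r n'))) (seq 0 r)
  end.

(* Galton-Watson probability (offspring law p) that the first n generations
   of tau(p) have shape t: product of p(out-degree) over vertices of
   depth < n. *)
Fixpoint gw_weight (p : nat -> R) (n : nat) (t : ptree) : R :=
  match n with
  | O => 1
  | S n' =>
      match t with
      | PNode ts =>
          p (length ts) * fold_right (fun s acc => gw_weight p n' s * acc) 1 ts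
      end
  end.

(* P[ every vertex of tau(p) in generations 0..n-1 has out-degree < r ] *)
Definition prob_maxdeg_lt_upto (p : nat -> R) (r n : nat) : R :=
  fold_right Rplus 0 (map (gw_weight p n) (trees_lt r n)).

(* x = P[M >= r]: the events {max out-degree in generations < n is < r}
   decrease to {M < r}, so by continuity of measure
   P[M < r] = lim_n prob_maxdeg_lt_upto p r n. *)
Definition is_prob_M_ge (p : nat -> R) (r : nat) (x : R) : Prop :=
  Un_cv (fun n => prob_maxdeg_lt_upto p r n) (1 - x).

(* Main.v *)
Require Import Defs.
From Stdlib Require Import Reals List Lra Lia.
Import ListNotations.
Open Scope R_scope.

Definition sumR (l : list R) : R := fold_right Rplus 0 l.

Lemma sumR_app l1 l2 : sumR (l1 ++ l2) = sumR l1 + sumR l2.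
Proof. induction l1; simpl; [ring| rewrite IHl1; ring]. Qed.

Lemma sumR_flat {A B : Type} (f : B -> R) (g : A -> list B) (l : list A) :
  sumR (map f (flat_map g l)) = sumR (map (fun x => sumR (map f (g x))) l).
Proof.
  induction l; simpl; auto. rewrite map_app, sumR_app, IHl. reflexivity.
Qed.

Lemma sumR_scal {A : Type} (a : R) (f : A -> R) l :
  sumR (map (fun x => a * f x) l) = a * sumR (map f l).
Proof. induction l; simpl; [ring| rewrite IHl; ring]. Qed.

Lemma sumR_le {A : Type} (f g : A -> R) l :
  (forall x, f x <= g x) -> sumR (map f l) <= sumR (map g l).
Proof. intro H; induction l; simpl; [lra| specialize (H a); lra]. Qed.

Lemma tuples_sum {A : Type} (w : A -> R) (T : list A) k : forall g : nat -> R,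
  sumR (map (fun ts => g (length ts) * fold_right (fun s acc => w s * acc) 1 ts)
          (tuples k T)) = g k * (sumR (map w T)) ^ k.
Proof.
  induction k; intro g; simpl.
  - ring.
  - rewrite sumR_flat.
    transitivity (sumR (map (fun x => g (S k) * w x * (sumR (map w T)) ^ k) T)).
    + f_equal. apply map_ext. intro x. rewrite map_map.
      rewrite <- (IHk (fun m => g (S m) * w x)). f_equal. apply map_ext.
      intro ts. simpl. ring.
    + rewrite (map_ext _ (fun x => (g (S k) * (sumR (map w T)) ^ k) * w x)) by (intro; ring).
      rewrite (sumR_scal _ w). ring.
Qed.

Definition F (p : nat -> R) (r : nat) (s : R) :=
  sumR (map (fun k => p k * s ^ k) (seq 0 r)).

Lemma q_step p r n :
  prob_maxdeg_lt_upto p r (S n) = F p r (prob_maxdeg_lt_upto p r n).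
Proof.
  unfold prob_maxdeg_lt_upto, F. simpl trees_lt.
  fold (sumR (map (gw_weight p (S n))
     (flat_map (fun k => map PNode (tuples k (trees_lt r n))) (seq 0 r)))).
  rewrite sumR_flat. fold (sumR (map (gw_weight p n) (trees_lt r n))).
  f_equal. apply map_ext. intro k. rewrite map_map.
  rewrite <- (tuples_sum (gw_weight p n) (trees_lt r n) k p).
  reflexivity.
Qed.

Lemma q_zero p r : prob_maxdeg_lt_upto p r 0 = 1.
Proof. unfold prob_maxdeg_lt_upto. simpl. ring. Qed.

Lemma sumR_seq (g : nat -> R) m : sumR (map g (seq 0 (S m))) = sum_f_R0 g m.
Proof.
  induction m. simpl. ring.
  rewrite seq_S, map_app, sumR_app, IHm. simpl. ring.
Qed.

Lemma bern (s : R) k : 0 <= s -> 1 + INR k * (s - 1) <= s ^ k.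
Proof.
  intro Hs. induction k. simpl; lra.
  rewrite S_INR. simpl.
  assert (0 <= INR k) by apply pos_INR.
  assert (s * (1 + INR k * (s-1)) <= s * s ^ k) by (apply Rmult_le_compat_l; lra).
  assert (0 <= INR k * ((s-1)*(s-1))) by (apply Rmult_le_pos; [auto| apply Rle_0_sqr]).
  destruct k; simpl in *; nra.
Qed.

Lemma F_mono p r s t : (forall k, 0 <= p k) -> 0 <= s <= t -> F p r s <= F p r t.
Proof.
  intros Hp Hst. unfold F. apply sumR_le. intro k.
  apply Rmult_le_compat_l; auto. apply pow_incr; lra.
Qed.

Lemma lin_sum p r m : sum_f_R0 (fun k => p k * (1 - INR k / INR r)) m =
  sum_f_R0 p m - sum_f_R0 (fun k => INR k * p k) m / INR r.
Proof.
  induction m; simpl. unfold Rdiv; ring. rewrite IHm. unfold Rdiv; ring.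
Qed.

Lemma tail_ineq p r m (Hp : forall k, 0 <= p k) (Hm : r = S m) d :
  sum_f_R0 (fun k => INR k * p k) (m + d) >=
  sum_f_R0 (fun k => INR k * p k) m + INR r * (sum_f_R0 p (m + d) - sum_f_R0 p m).
Proof.
  induction d. rewrite Nat.add_0_r. lra.
  rewrite Nat.add_succ_r. rewrite !tech5.
  assert (INR r <= INR (S (m + d))) by (apply le_INR; lia).
  specialize (Hp (S (m+d))).
  assert (INR r * p (S (m+d)) <= INR (S (m+d)) * p (S (m+d))) by (apply Rmult_le_compat_r; lra).
  rewrite Rmult_minus_distr_l, Rmult_plus_distr_l in *.
  lra.
Qed.

Lemma key p mu r m (Hp : forall k, 0 <= p k) (Hp_sum : infinite_sum p 1)
  (Hmu : infinite_sum (fun k => INR k * p k) mu) (Hm : r = S m) :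
  sum_f_R0 (fun k => INR k * p k) m + INR r * (1 - sum_f_R0 p m) <= mu.
Proof.
  set (A := sum_f_R0 (fun k => INR k * p k) m).
  set (B := sum_f_R0 p m).
  assert (Hg : forall N, sum_f_R0 (fun k => INR k * p k) N <= mu).
  { apply growing_ineq; [|exact Hmu]. intro n. unfold Un_growing. rewrite tech5.
    assert (0 <= INR (S n) * p (S n)) by (apply Rmult_le_pos; [apply pos_INR|auto]). lra. }
  assert (Hr : 0 < INR r) by (rewrite Hm; apply lt_0_INR; lia).
  destruct (Rle_dec (A + INR r * (1 - B)) mu) as [H|H]; auto. exfalso.
  set (e := A + INR r * (1 - B) - mu).
  assert (He : 0 < e / INR r) by (unfold e; apply Rdiv_lt_0_compat; lra).
  destruct (Hp_sum _ He) as [N0 HN0].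
  specialize (HN0 (N0 + m)%nat ltac:(lia)). unfold Rdist in HN0.
  pose proof (tail_ineq p r m Hp Hm N0) as T.
  rewrite Nat.add_comm in HN0.
  specialize (Hg (m + N0)%nat).
  apply Rabs_def2 in HN0. destruct HN0 as [H1 H2].
  assert (INR r * (e / INR r) = e) by (field; lra).
  assert (INR r * (sum_f_R0 p (m + N0) - 1) > INR r * (- (e / INR r))).
  { apply Rmult_gt_compat_l; lra. }
  fold A B in T. unfold e in *. lra.
Qed.

Lemma F_lower p mu r (Hp : forall k, 0 <= p k) (Hp_sum : infinite_sum p 1)
  (Hmu : infinite_sum (fun k => INR k * p k) mu) (Hmu_le1 : mu <= 1)
  (Hr : (1 <= r)%nat) s :
  1 - 1 / INR r <= s -> 0 <= s -> 1 - 1 / INR r <= F p r s.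
Proof.
  intros Hs Hs0.
  destruct r as [|m]; [lia|].
  assert (Hr0 : 0 < INR (S m)) by (apply lt_0_INR; lia).
  apply Rle_trans with (sumR (map (fun k => p k * (1 - INR k / INR (S m))) (seq 0 (S m)))).
  - rewrite sumR_seq, lin_sum.
    pose proof (key p mu (S m) m Hp Hp_sum Hmu eq_refl).
    apply Rmult_le_reg_l with (INR (S m)); auto.
    replace (INR (S m) * (1 - 1 / INR (S m))) with (INR (S m) - 1) by (field; lra).
    replace (INR (S m) * (sum_f_R0 p m - sum_f_R0 (fun k => INR k * p k) m / INR (S m)))
      with (INR (S m) * sum_f_R0 p m - sum_f_R0 (fun k => INR k * p k) m) by (field; lra).
    lra.
  - unfold F. apply sumR_le. intro k. apply Rmult_le_compat_l; auto.
    eapply Rle_trans; [|apply bern; auto].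
    assert (0 <= INR k) by apply pos_INR.
    assert (- (1 / INR (S m)) <= s - 1) by lra.
    assert (INR k * (- (1 / INR (S m))) <= INR k * (s - 1)) by (apply Rmult_le_compat_l; lra).
    unfold Rdiv in *. lra.
Qed.

Theorem lemma2p7 (p : nat -> R) (mu : R)
  (Hp_nonneg : forall k, 0 <= p k)
  (Hp_sum : infinite_sum p 1)
  (Hmu : infinite_sum (fun k => INR k * p k) mu)
  (Hmu_pos : 0 < mu)
  (Hmu_le1 : mu <= 1)
  (r : nat) (Hr : (1 <= r)%nat) :
  exists x, is_prob_M_ge p r x /\ x <= 1 / INR r.
Proof.
  set (q := fun n => prob_maxdeg_lt_upto p r n).
  set (c := 1 - 1 / INR r).
  assert (Hr0 : 0 < INR r) by (apply lt_0_INR; lia).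
  assert (Hc0 : 0 <= c).
  { unfold c. assert (1 <= INR r) by (replace 1 with (INR 1) by reflexivity; apply le_INR; lia).
    assert (1 / INR r <= 1).
    { apply Rmult_le_reg_l with (INR r); auto. replace (INR r * (1 / INR r)) with 1 by (field; lra). lra. }
    lra. }
  assert (Hlow : forall n, c <= q n).
  { induction n.
    - unfold q. rewrite q_zero. unfold c. assert (0 < 1 / INR r) by (apply Rdiv_lt_0_compat; lra). lra.
    - unfold q. rewrite q_step. apply (F_lower p mu r); auto; fold (q n); lra. }
  assert (HB : F p r 1 <= 1).
  { destruct r as [|m]; [lia|]. unfold F.
    rewrite (map_ext _ p) by (intro; rewrite pow1; ring).
    rewrite sumR_seq. apply growing_ineq; [|exact Hp_sum].
    intro n. rewrite tech5. specialize (Hp_nonneg (S n)). lra. }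
  assert (Hdec : Un_decreasing q).
  { intro n. induction n.
    - unfold q. rewrite q_step, q_zero. exact HB.
    - unfold q in *. rewrite (q_step p r (S n)). rewrite (q_step p r n) at 2.
      apply F_mono; auto. split; [|exact IHn].
      specialize (Hlow (S n)). unfold q in Hlow. lra. }
  assert (Hlb : has_lb q).
  { exists (- c). intros x [i ->]. unfold opp_seq. specialize (Hlow i). lra. }
  destruct (decreasing_cv q Hdec Hlb) as [L HL].
  exists (1 - L). split.
  - unfold is_prob_M_ge. replace (1 - (1 - L)) with L by ring. exact HL.
  - assert (c <= L).
    { destruct (Rle_dec c L) as [H|H]; auto. exfalso.
      destruct (HL (c - L) ltac:(lra)) as [N HN].
      specialize (HN N (le_n N)). unfold Rdist in HN. apply Rabs_def2 in HN.
      specialize (Hlow N). lra. }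
    unfold c in *. lra.
Qed.
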